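(* For any $w\in\{a,\beta\}^*$ such that $\varphi_w$ is primitive, the set $C(w)\cup C(H(w))$ is closed under derivation, where $C(x) = \{\varphi_v : v = \mathrm{cyc}^k(x),\ k\in\mathbb{N}\}$.
   Context: Morphisms on $\{0,1\}^*$: $\varphi_a: 0\mapsto 0, 1 \mapsto 10$; $\varphi_b: 0 \mapsto 0, 1\mapsto 01$; $\varphi_\alpha: 0\mapsto 01, 1\mapsto 1$; $\varphi_\beta: 0\mapsto 10, 1 \mapsto 1$; for $w=w_0\cdots w_{m-1}$, $\varphi_w = \varphi_{w_0}\circ\cdots\circ\varphi_{w_{m-1}}$. $\mathrm{cyc}(u_0u_1\cdots u_{n-1}) = u_1\cdots u_{n-1}u_0$. $H$ is the monoid morphism on $\{a,b,\alpha,\beta\}^*$ with $H(a)=H(b)=b$, $H(\alpha)=\alpha$, $H(\beta)=\beta$. A morphism is primitive if some power maps every letter to a word containing every letter; a substitution is a morphism $\psi$ with a letter $c$, $\psi(c)=cx$, $x$ nonempty, $|\psi^n(c)|\to\infty$. Derived word: for a uniformly recurrent word $\mathbf{u}$ and factor $v$, a return word of $v$ is a factor $r$ such that $rv$ is a factor in which $v$ occurs exactly twice (as prefix and suffix); with $r_0,\dots,r_k$ all return words and $\mathbf{u}=p\,r_{s_0}r_{s_1}\cdots$, $|p|$ the first occurrence of $v$, $\mathbf{d}_{\mathbf{u}}(v)=s_0s_1\cdots$, up to permutation of letters. A finite set $M$ of primitive substitutions is closed under derivation if for every $\varphi\in M$, every fixed point $\mathbf{u}$ of $\varphi$ and every factor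 $v$ of $\mathbf{u}$, $\mathbf{d}_{\mathbf{u}}(v)$ is fixed by some $\psi\in M$. *)

(* Defs.v *)
From mathcomp Require Import all_boot.
Set Implicit Arguments. Unset Strict Implicit. Unset Printing Implicit Defensive.

Inductive sym := Sa | Sb | Salpha | Sbeta.

(* The binary alphabet {0,1} is bool, with 0 = false and 1 = true. *)
Definition morph := bool -> seq bool.

Definition mapw (f : morph) (s : seq bool) : seq bool := flatten (map f s).

Definition phi_letter (x : sym) : morph :=
  match x with
  | Sa     => fun c => if c then [:: true; false] else [:: false]
  | Sb     => fun c => if c then [:: false; true] else [:: false]
  | Salpha => fun c => if c then [:: true] else [:: false; true]
  | Sbeta  => fun c => if c then [:: true] else [:: true; false]
  end.

Definition phi (w : seq sym) : morph :=
  fun c => foldr (fun x acc => mapw (phi_letter x) acc) [:: c] w.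

Definition cyc {T : Type} (s : seq T) : seq T := rot 1 s.

Definition Hsym (x : sym) : sym :=
  match x with Sa | Sb => Sb | y => y end.
Definition H (w : seq sym) : seq sym := map Hsym w.

Definition is_a_or_beta (x : sym) : bool :=
  match x with Sa | Sbeta => true | _ => false end.

(* C(x) = { phi_v : v = cyc^k(x), k in N }, represented by its index words v. *)
Definition Cset (x : seq sym) (v : seq sym) : Prop := exists k : nat, v = iter k cyc x.

Definition mpow (f : morph) (n : nat) : morph :=
  iter n (fun g c => mapw f (g c)) (fun c => [:: c]).

Definition primitive (f : morph) : Prop :=
  exists n : nat, forall c d : bool, d \in mpow f n c.

Definition substitution (f : morph) : Prop :=
  exists (c : bool) (x : seq bool),
    [/\ f c = c :: x, x != [::] &
        forall N : nat, exists n0 : nat, forall n, n0 <= n -> N <= size (mpow f n c)].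

Definition pref (u : nat -> bool) (n : nat) : seq bool := mkseq u n.

(* u is a fixed point of f : f(u) (the infinite concatenation f(u_0) f(u_1) ...)
   is infinite and equals u. *)
Definition fixed_by (f : morph) (u : nat -> bool) : Prop :=
  (forall n i, i < size (mapw f (pref u n)) -> nth false (mapw f (pref u n)) i = u i)
  /\ (forall N : nat, exists n : nat, N <= size (mapw f (pref u n))).

Definition occurs (u : nat -> bool) (v : seq bool) (i : nat) : Prop :=
  forall j, j < size v -> u (i + j) = nth false v j.

Definition factor (u : nat -> bool) (v : seq bool) : Prop := exists i, occurs u v i.

Definition occ_enum (u : nat -> bool) (v : seq bool) (pos : nat -> nat) : Prop :=
  [/\ forall n, occurs u v (pos n),
      forall n, pos n < pos n.+1 &
      forall i, occurs u v i -> exists n, pos n = i].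

Definition retw (u : nat -> bool) (pos : nat -> nat) (n : nat) : seq bool :=
  [seq u k | k <- iota (pos n) (pos n.+1 - pos n)].

(* The derived word d_u(v), up to a (injective) renaming of its letters (the
   return words) into {0,1}, is a fixed point of f. *)
Definition derived_fixed_by (u : nat -> bool) (v : seq bool) (f : morph) : Prop :=
  exists pos : nat -> nat, occ_enum u v pos /\
  exists lab : seq bool -> bool,
    (forall m n, lab (retw u pos m) = lab (retw u pos n) -> retw u pos m = retw u pos n)
    /\ fixed_by f (fun n => lab (retw u pos n)).

Definition closed_under_derivation (M : seq sym -> Prop) : Prop :=
  (forall v, M v -> primitive (phi v) /\ substitution (phi v)) /\
  (forall v, M v -> forall u, fixed_by (phi v) u ->
     forall x, factor u x -> exists v', M v' /\ derived_fixed_by u x (phi v')).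

(* Main.v *)
Require Import Defs.
From mathcomp Require Import all_boot.
From mathcomp Require Import zify.
From Stdlib Require Import FunctionalExtensionality ClassicalEpsilon.
Set Implicit Arguments. Unset Strict Implicit. Unset Printing Implicit Defensive.

Definition win (u : nat -> bool) i n := [seq u k | k <- iota i n].

Lemma size_win u i n : size (win u i n) = n.
Proof. by rewrite size_map size_iota. Qed.

Lemma nth_win u i n k : k < n -> nth false (win u i n) k = u (i + k).
Proof. by move=> kn; rewrite (nth_map 0) ?size_iota // nth_iota. Qed.

Lemma pref_win u n : pref u n = win u 0 n.
Proof. by []. Qed.

Lemma win_add u i a b : win u i (a + b) = win u i a ++ win u (i + a) b.
Proof. by rewrite /win iotaD map_cat. Qed.

Lemma pref_add u a b : pref u (a + b) = pref u a ++ win u a b.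
Proof. by rewrite pref_win win_add. Qed.

Lemma take_win u i n L : take L (win u i n) = win u i (minn L n).
Proof. by rewrite /win -map_take take_iota. Qed.

Lemma win1 u i : win u i 1 = [:: u i].
Proof. by []. Qed.

Lemma occursE u x i : occurs u x i <-> win u i (size x) = x.
Proof.
split.
- move=> H; apply: (@eq_from_nth _ false); first by rewrite size_win.
  by move=> k; rewrite size_win => kx; rewrite nth_win // H.
- by move=> H j jx; rewrite -(nth_win u i jx) H.
Qed.

Lemma mapw_cat f s1 s2 : mapw f (s1 ++ s2) = mapw f s1 ++ mapw f s2.
Proof. by rewrite /mapw map_cat flatten_cat. Qed.

Lemma mapw_cons f c s : mapw f (c :: s) = f c ++ mapw f s.
Proof. by []. Qed.

Lemma mapw_nil f : mapw f [::] = [::].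
Proof. by []. Qed.

Lemma mapw1 f c : mapw f [:: c] = f c.
Proof. by rewrite mapw_cons cats0. Qed.

Lemma mapw_comp f g s : mapw f (mapw g s) = mapw (fun c => mapw f (g c)) s.
Proof. by elim: s => //= c s IH; rewrite !mapw_cons mapw_cat IH. Qed.

Lemma eq_mapw f g s : f =1 g -> mapw f s = mapw g s.
Proof. by move=> e; rewrite /mapw (eq_map e). Qed.

Definition nonerasing (f : morph) := forall c, 0 < size (f c).

Lemma size_mapw_ge f s : nonerasing f -> size s <= size (mapw f s).
Proof.
move=> ne; elim: s => //= c s IH; rewrite mapw_cons size_cat.
by have := ne c; lia.
Qed.

Definition IsImg (f : morph) (u' u : nat -> bool) :=
  forall n, mapw f (pref u' n) = pref u (size (mapw f (pref u' n))).

Definition Fix f u := IsImg f u u.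

Definition Pb (f : morph) (u' : nat -> bool) j := size (mapw f (pref u' j)).

Lemma PbS f u' j : Pb f u' j.+1 = Pb f u' j + size (f (u' j)).
Proof. by rewrite /Pb -addn1 pref_add mapw_cat win1 mapw1 size_cat. Qed.

Lemma Pb0 f u' : Pb f u' 0 = 0.
Proof. by []. Qed.

Lemma Pb_add f u' j N : Pb f u' (j + N) = Pb f u' j + size (mapw f (win u' j N)).
Proof. by rewrite /Pb pref_add mapw_cat size_cat. Qed.

Lemma Pb_ltn f u' : nonerasing f -> forall j k, j < k -> Pb f u' j < Pb f u' k.
Proof.
move=> ne j k; elim: k => // k IH; rewrite ltnS leq_eqVlt => /orP[/eqP->|/IH h];
rewrite PbS; have := ne (u' k); lia.
Qed.

Lemma Pb_leq f u' : nonerasing f -> forall j k, (Pb f u' j <= Pb f u' k) = (j <= k).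
Proof.
move=> ne j k; apply/idP/idP.
- by move=> h; rewrite leqNgt; apply/negP => /(Pb_ltn u' ne); lia.
- by rewrite leq_eqVlt => /orP[/eqP->//|/(Pb_ltn u' ne)]; lia.
Qed.

Lemma Pb_inj f u' : nonerasing f -> forall j k, Pb f u' j = Pb f u' k -> j = k.
Proof.
move=> ne j k e; apply/eqP; by rewrite eqn_leq -(Pb_leq u' ne j k) -(Pb_leq u' ne k j) e leqnn.
Qed.

Lemma img_win f u' u : IsImg f u' u -> forall j N,
  win u (Pb f u' j) (size (mapw f (win u' j N))) = mapw f (win u' j N).
Proof.
move=> H j N; have := H (j + N); have := H j.
rewrite pref_add mapw_cat size_cat -/(Pb f u' j) => E1.
rewrite E1 pref_add => /eqP; rewrite eqseq_cat; last by rewrite /pref size_mkseq.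
by case/andP => _ /eqP.
Qed.

Lemma block f u' : nonerasing f -> forall i, exists j, Pb f u' j <= i < Pb f u' j.+1.
Proof.
move=> ne; elim=> [|i [j /andP[h1 h2]]].
- by exists 0; rewrite PbS Pb0; have := ne (u' 0); lia.
- case: (ltnP i.+1 (Pb f u' j.+1)) => h3.
  + by exists j; apply/andP; split => //; lia.
  + exists j.+1; rewrite (PbS _ _ j.+1); have := ne (u' j.+1); lia.
Qed.

Lemma u_block f u' u : IsImg f u' u -> forall j i, Pb f u' j <= i < Pb f u' j.+1 ->
  u i = nth false (f (u' j)) (i - Pb f u' j).
Proof.
move=> H j i /andP[h1 h2]; have := img_win H j 1; rewrite win1 mapw1 => E.
rewrite -E nth_win; first by congr u; lia.
by move: h2; rewrite PbS; lia.
Qed.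

Lemma sync_start f u' u m : nonerasing f -> IsImg f u' u ->
  (forall c k, k < size (f c) -> nth false (f c) k = m -> k = 0) ->
  forall i, u i = m -> exists j, Pb f u' j = i.
Proof.
move=> ne H hm i ui; have [j hj] := block u' ne i.
exists j; have := u_block H hj; rewrite ui => /esym/hm.
by move: hj; rewrite PbS => hj /(_ ltac:(lia)); lia.
Qed.

Lemma sync_end f u' u e : nonerasing f -> IsImg f u' u ->
  (forall c k, k < size (f c) -> nth false (f c) k = e -> k = (size (f c)).-1) ->
  forall i, u i = e -> exists j, Pb f u' j.+1 = i.+1.
Proof.
move=> ne H hm i ui; have [j hj] := block u' ne i.
exists j; have := u_block H hj; rewrite ui => /esym/hm.
by move: hj; rewrite PbS => hj /(_ ltac:(lia)); have := ne (u' j); lia.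
Qed.

Lemma win_prefix f u' u : nonerasing f -> IsImg f u' u -> forall j L,
  win u (Pb f u' j) L = take L (mapw f (win u' j L)).
Proof.
move=> ne H j L; rewrite -(img_win H j L) take_win.
by congr win; have := size_mapw_ge (win u' j L) ne; rewrite size_win; lia.
Qed.

Lemma win_parse f u' u : nonerasing f -> IsImg f u' u -> forall j k,
  j <= k -> win u (Pb f u' j) (Pb f u' k - Pb f u' j) = mapw f (win u' j (k - j)).
Proof.
move=> ne H j k jk; rewrite -(img_win H j (k - j)); congr win.
by rewrite -{1}(subnKC jk) Pb_add; lia.
Qed.

Lemma inj_cancel (F : seq bool -> seq bool) : injective F -> exists G, cancel F G.
Proof.
move=> iF; exists (fun s => epsilon (inhabits [::]) (fun t => F t = s)).
move=> t; apply: iF; exact: (epsilon_spec (inhabits [::]) (fun t' => F t' = F t) (ex_intro _ t erefl)).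
Qed.

Lemma retwE u pos n : retw u pos n = win u (pos n) (pos n.+1 - pos n).
Proof. by []. Qed.

Lemma transfer u x pos u' pos' F g : occ_enum u x pos -> injective F ->
  (forall n, retw u pos n = F (retw u' pos' n)) ->
  (exists lab, (forall m n, lab (retw u' pos' m) = lab (retw u' pos' n) ->
       retw u' pos' m = retw u' pos' n) /\ fixed_by g (fun n => lab (retw u' pos' n))) ->
  derived_fixed_by u x g.
Proof.
move=> oe iF hr [lab [hl hf]]; have [G FG] := inj_cancel iF.
exists pos; split => //; exists (fun s => lab (G s)); split.
- by move=> m n; rewrite !hr !FG => /hl ->.
- have -> : (fun n => lab (G (retw u pos n))) = (fun n => lab (retw u' pos' n)).
    by apply: functional_extensionality => n; rewrite hr FG.
  exact: hf.
Qed.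

Lemma derived_R2 f u' u x y g : nonerasing f -> IsImg f u' u -> injective (mapw f) ->
  (forall i, occurs u x i <-> exists j, i = Pb f u' j /\ occurs u' y j) ->
  derived_fixed_by u' y g -> derived_fixed_by u x g.
Proof.
move=> ne H iF hocc [pos' [[o1 o2 o3] hl]].
apply: (@transfer u x (fun n => Pb f u' (pos' n)) u' pos' (mapw f)) => //.
- split.
  + by move=> n; apply/hocc; exists (pos' n).
  + by move=> n; apply: Pb_ltn.
  + move=> i /hocc [j [-> oj]]; have [n <-] := o3 _ oj; by exists n.
- move=> n; rewrite !retwE win_parse //; exact: ltnW.
Qed.

Lemma derived_R0 u x x' g : (forall i, occurs u x i <-> occurs u x' i) ->
  derived_fixed_by u x' g -> derived_fixed_by u x g.
Proof.
move=> hocc [pos [[o1 o2 o3] hl]]; exists pos; split => //; split => //.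
- by move=> n; apply/hocc.
- by move=> i /hocc /o3.
Qed.

Lemma occurs_cons u c x i : occurs u (c :: x) i <-> u i = c /\ occurs u x i.+1.
Proof.
split.
- move=> h; split; first by have := h 0 erefl; rewrite addn0.
  by move=> j hj; have := h j.+1 hj; rewrite addnS.
- move=> [h1 h2] [|j] hj /=; first by rewrite addn0.
  by rewrite addnS h2.
Qed.

Lemma derived_R1 u c x g : (forall i, occurs u x i -> 0 < i /\ u i.-1 = c) ->
  derived_fixed_by u (c :: x) g -> derived_fixed_by u x g.
Proof.
move=> hocc [pos' [[o1 o2 o3] hl]].
apply: (@transfer u x (fun n => (pos' n).+1) u pos' (rot 1)) => //.
- split.
  + by move=> n; have /occurs_cons[] := o1 n.
  + by move=> n; rewrite ltnS.
  + move=> i oi; have [i0 ci] := hocc i oi.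
    have : occurs u (c :: x) i.-1 by apply/occurs_cons; rewrite prednK.
    by move=> /o3 [n hn]; exists n; rewrite hn prednK.
- exact: rot_inj.
- move=> n; rewrite !retwE subSS.
  have hlt := o2 n; set a := pos' n in hlt *; set b := pos' n.+1 in hlt *.
  have ha : u a = c by have /occurs_cons[] := o1 n.
  have hb : u b = c by have /occurs_cons[] := o1 n.+1.
  have -> : b - a = (b - a).-1 + 1 by lia.
  set k := (b - a).-1.
  have E1 : win u a (k+1) = u a :: win u a.+1 k by rewrite addnC win_add win1 addn1.
  have E2 : win u a.+1 (k+1) = rcons (win u a.+1 k) (u (a.+1 + k)) by rewrite win_add win1 cats1.
  rewrite E1 E2 rot1_cons ha; congr rcons; rewrite -hb; congr u; lia.
Qed.

Lemma win_shift (u : nat -> bool) a k : win u a.+1 k = win (fun n => u n.+1) a k.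
Proof. by rewrite /win -addn1 addnC iotaDl -map_comp; apply: eq_map => j /=; rewrite add1n. Qed.

Lemma derived_Rtail u x g : ~ occurs u x 0 ->
  derived_fixed_by (fun n => u n.+1) x g -> derived_fixed_by u x g.
Proof.
move=> n0 [pos' [[o1 o2 o3] hl]].
have hs : forall i, occurs u x i.+1 <-> occurs (fun n => u n.+1) x i.
  by move=> i; split => h j hj; have := h j hj; rewrite addSn.
apply: (@transfer u x (fun n => (pos' n).+1) (fun n => u n.+1) pos' id) => //.
- split.
  + by move=> n; apply/hs.
  + by move=> n; rewrite ltnS.
  + move=> [|i] oi; first by [].
    by have [n hn] := o3 _ (proj1 (hs i) oi); exists n; rewrite hn.
- by move=> n; rewrite !retwE subSS win_shift.
Qed.

Lemma derived_base u g : fixed_by g u -> derived_fixed_by u [::] g.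
Proof.
move=> hf; exists id; split.
- by split => // i _; exists i.
- exists (head false); split.
  + by move=> m n; rewrite !retwE !subSnn !win1 /= => ->.
  + have -> : (fun n => head false (retw u id n)) = u by apply: functional_extensionality => n; rewrite retwE subSnn win1.
    exact: hf.
Qed.

Lemma Fix_fixed_by f u : nonerasing f -> Fix f u <-> fixed_by f u.
Proof.
move=> ne; split.
- move=> H; split.
  + by move=> n i hi; rewrite (H n) /pref nth_mkseq //; move: hi; rewrite (H n) size_mkseq.
  + by move=> N; exists N; have := size_mapw_ge (pref u N) ne; rewrite /pref size_mkseq.
- move=> [H1 _] n; apply: (@eq_from_nth _ false); first by rewrite /pref size_mkseq.
  by move=> i hi; rewrite H1 // /pref nth_mkseq.
Qed.

Definition Tm (m : bool) : morph := fun c => if c == m then [:: m] else [:: m; ~~ m].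
Definition Am : morph := phi_letter Sa.

Lemma Tm_ne m : nonerasing (Tm m).
Proof. by move=> c; rewrite /Tm; case: eqP. Qed.

Lemma Am_ne : nonerasing Am.
Proof. by case. Qed.

Lemma headT m y : exists t, mapw (Tm m) y ++ [:: m] = m :: t.
Proof. case: y => [|c y]; first by exists [::]. 
by rewrite mapw_cons /Tm; case: eqP => _; eexists. Qed.

Lemma headT2 m z : mapw (Tm m) z = [::] \/ exists t, mapw (Tm m) z = m :: t.
Proof. case: z => [|c z]; first by left. 
by right; rewrite mapw_cons /Tm; case: eqP => _; eexists. Qed.

Lemma TmTT : Tm true true = [:: true]. Proof. by []. Qed.
Lemma TmTF : Tm true false = [:: true; false]. Proof. by []. Qed.
Lemma TmFT : Tm false true = [:: false; true]. Proof. by []. Qed.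
Lemma TmFF : Tm false false = [:: false]. Proof. by []. Qed.

Lemma decT m y z : prefix (mapw (Tm m) y ++ [:: m]) (mapw (Tm m) z) -> prefix y z.
Proof.
elim: y z => [|c y IH] [|d z] //=.
- by rewrite mapw_cons -catA; have [t ->] := headT m y; rewrite /Tm; case: eqP.
- rewrite !mapw_cons -catA; have [t ht] := headT m y; have hz := headT2 m z.
  case: c d => [] []; case: m IH ht hz => IH ht hz; rewrite ?TmTT ?TmTF ?TmFT ?TmFF /=.
  all: try by move/IH.
  all: rewrite ?ht /=.
  all: try done.
  all: by case: hz => [->|[t' ->]].
Qed.

Lemma decA y z : prefix (mapw Am y) (mapw Am z) -> prefix y z.
Proof.
elim: y z => [|c y IH] [|d z] //=.
- by rewrite mapw_cons; case: c.
- by rewrite !mapw_cons; case: c; case: d => //= /IH ->.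
Qed.

Lemma prefix_antisym (y z : seq bool) : prefix y z -> prefix z y -> y = z.
Proof.
move=> /prefixP [s1 e1] /prefixP [s2 e2].
have := congr1 size e2; rewrite e1 !size_cat => h.
have s10 : size s1 = 0 by lia.
by case: s1 e1 s10 h => // _ _ _; rewrite cats0.
Qed.

Lemma Tm_inj m : injective (mapw (Tm m)).
Proof.
move=> y; elim: y => [|c y IH] [|d z] //=.
- by rewrite mapw_cons; case: (Tm m d) (Tm_ne m d).
- by rewrite mapw_cons; case: (Tm m c) (Tm_ne m c).
- rewrite !mapw_cons; have hy := headT2 m y; have hz := headT2 m z.
  case: c d => [] []; case: m IH hy hz => IH hy hz; rewrite ?TmTT ?TmTF ?TmFT ?TmFF /=.
  all: try by case => /IH ->.
  all: try by case: hy => [->|[t ->]].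
  all: try by case: hz => [->|[t ->]].
Qed.

Lemma Am_inj : injective (mapw Am).
Proof.
move=> y; elim: y => [|c y IH] [|d z] //=.
- by rewrite mapw_cons; case: d.
- by rewrite mapw_cons; case: c.
- by rewrite !mapw_cons; case: c; case: d => //=; move=> [] /IH ->.
Qed.

Lemma occurs_rcons u x e i : occurs u (rcons x e) i <-> occurs u x i /\ u (i + size x) = e.
Proof.
split.
- move=> h; split.
  + by move=> j hj; have := h j; rewrite size_rcons nth_rcons hj => ->; lia.
  + by have := h (size x); rewrite size_rcons nth_rcons ltnn eqxx => ->.
- move=> [h1 h2] j; rewrite size_rcons ltnS leq_eqVlt nth_rcons => /orP[/eqP->|hj].
  + by rewrite ltnn eqxx.
  + by rewrite hj h1.
Qed.

Lemma occ_img f u' u y j : IsImg f u' u -> occurs u' y j -> occurs u (mapw f y) (Pb f u' j).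
Proof.
move=> H /occursE oy; apply/occursE.
by have := img_win H j (size y); rewrite oy.
Qed.

Lemma occ_nth u x i k : occurs u x i -> k < size x -> u (i + k) = nth false x k.
Proof. by move=> h hk; apply: h. Qed.

Lemma bstart f u' u k : nonerasing f -> IsImg f u' u -> u (Pb f u' k) = nth false (f (u' k)) 0.
Proof.
move=> ne H; rewrite (u_block H (j := k)) ?subnn //.
by rewrite leqnn PbS /=; have := ne (u' k); lia.
Qed.

Lemma Pb_occ f u' y j : occurs u' y j -> Pb f u' (j + size y) = Pb f u' j + size (mapw f y).
Proof. by move=> /occursE oy; rewrite Pb_add oy. Qed.

Lemma occ_dec f u' u x y j : nonerasing f -> IsImg f u' u -> occurs u x (Pb f u' j) ->
  (forall z, prefix x (mapw f z) -> prefix y z) -> size y <= size x -> occurs u' y j.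
Proof.
move=> ne H /occursE ox dec sy; apply/occursE.
have := win_prefix ne H j (size x); rewrite ox => e.
have : prefix x (mapw f (win u' j (size x))) by rewrite prefixE -e.
move=> /dec; rewrite prefixE take_win => /eqP e2; rewrite -{2}e2; congr win; symmetry; exact/minn_idPl.
Qed.

Lemma Tm_start m c k : k < size (Tm m c) -> nth false (Tm m c) k = m -> k = 0.
Proof. by rewrite /Tm; case: eqP => _; case: k => [|[|k]] //=; case: (m). Qed.

Lemma Tm_end m c k : k < size (Tm m c) -> nth false (Tm m c) k = ~~ m -> k = (size (Tm m c)).-1.
Proof. by rewrite /Tm; case: eqP => _; case: k => [|[|k]] //=; case: (m). Qed.

Lemma Am_start c k : k < size (Am c) -> nth false (Am c) k = true -> k = 0.
Proof. by case: c; case: k => [|[|k]]. Qed.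

Lemma Am_end c k : k < size (Am c) -> nth false (Am c) k = false -> k = (size (Am c)).-1.
Proof. by case: c; case: k => [|[|k]]. Qed.

Lemma occT m u' u : IsImg (Tm m) u' u -> forall y i,
  occurs u (mapw (Tm m) y ++ [:: m]) i <-> exists j, i = Pb (Tm m) u' j /\ occurs u' y j.
Proof.
move=> H y i; split.
- move=> oi; have [t ht] := headT m y.
  have ui : u i = m by have := occ_nth oi (k := 0); rewrite ht addn0 => ->.
  have [j hj] := sync_start (Tm_ne m) H (@Tm_start m) ui.
  exists j; split => //; apply: (occ_dec (Tm_ne m) H (x := mapw (Tm m) y ++ [:: m])).
  + by rewrite hj.
  + by move=> z; apply: decT.
  + by rewrite size_cat /=; have := size_mapw_ge y (Tm_ne m); lia.
- move=> [j [-> oj]]; rewrite cats1; apply/occurs_rcons; split; first exact: occ_img.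
  rewrite -Pb_occ // bstart //; last exact: Tm_ne.
  by rewrite /Tm; case: eqP.
Qed.

Lemma occA u' u : IsImg Am u' u -> forall y i,
  occurs u (mapw Am (true :: y)) i <-> exists j, i = Pb Am u' j /\ occurs u' (true :: y) j.
Proof.
move=> H y i; split.
- move=> oi.
  have ui : u i = true by have := occ_nth oi (k := 0); rewrite addn0 => ->.
  have [j hj] := sync_start Am_ne H Am_start ui.
  exists j; split => //; apply: (occ_dec Am_ne H (x := mapw Am (true :: y))).
  + by rewrite hj.
  + by move=> z; apply: decA.
  + exact: size_mapw_ge Am_ne.
- by move=> [j [-> oj]]; apply: occ_img.
Qed.

Lemma extT m u' u p : IsImg (Tm m) u' u -> u p = ~~ m -> u p.+1 = m.
Proof.
move=> H up; have [k hk] := sync_end (Tm_ne m) H (@Tm_end m) up.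
by rewrite -hk bstart //; [rewrite /Tm; case: eqP | exact: Tm_ne].
Qed.

Lemma size_Tm_le m c : size (Tm m c) <= 2.
Proof. by rewrite /Tm; case: eqP. Qed.

Lemma prevT m u' u p : IsImg (Tm m) u' u -> u p = ~~ m -> 0 < p /\ u p.-1 = m.
Proof.
move=> H up; have [j hj] := block u' (Tm_ne m) p.
have := u_block H hj; rewrite up => hn.
have hj' := hj; move: hj'; rewrite PbS => hj'.
have hk : p - Pb (Tm m) u' j < size (Tm m (u' j)) by lia.
have e1 := Tm_end hk (esym hn).
have e0 : p - Pb (Tm m) u' j <> 0.
  by move=> e0; move: hn; rewrite e0 /Tm; case: eqP => _ /=; case: (m).
have := size_Tm_le m (u' j) => hs.
have -> : p.-1 = Pb (Tm m) u' j by lia.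
split; first lia.
by rewrite bstart //; [rewrite /Tm; case: eqP | exact: Tm_ne].
Qed.

Lemma extA u' u p : IsImg Am u' u -> u p = true -> u p.+1 = false.
Proof.
move=> H up; have [j hj] := sync_start Am_ne H Am_start up.
have := bstart j Am_ne H; rewrite hj up.
case e: (u' j) => //= _.
rewrite (u_block H (j := j) (i := p.+1)); first by rewrite e hj subSnn.
by rewrite PbS e /=; lia.
Qed.

Lemma parse f u' u X j k : nonerasing f -> IsImg f u' u -> occurs u X (Pb f u' j) ->
  Pb f u' k = Pb f u' j + size X -> X = mapw f (win u' j (k - j)).
Proof.
move=> ne H /occursE oX hk.
have jk : j <= k by rewrite -(Pb_leq u' ne) hk; lia.
by have := win_parse ne H jk; rewrite hk addKn oX.
Qed.

Lemma occ_last u b x i : occurs u (b :: x) i -> u (i + size x) = last b x.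
Proof.
move=> h; have := occ_nth h (k := size x) (ltnSn _) => ->.
by rewrite (lastI b x) nth_rcons size_belast ltnn eqxx.
Qed.

Lemma caseTm m u' u x i : IsImg (Tm m) u' u -> occurs u (m :: x) i ->
  exists y, (exists j, occurs u' y j) /\
   (forall i, occurs u (m :: x) i <-> exists j, i = Pb (Tm m) u' j /\ occurs u' y j) /\
   (m :: x = mapw (Tm m) y ++ [:: m] \/ (m :: x = mapw (Tm m) y /\ last m x = ~~ m)).
Proof.
move=> H oi; have ne := Tm_ne m.
have ui : u i = m by have := occ_nth oi (k := 0); rewrite addn0 => ->.
have [j hj] := sync_start ne H (@Tm_start m) ui.
case hl : (last m x == m).
- have ex : m :: x = rcons (belast m x) m by rewrite (lastI m x) (eqP hl).
  have oi' : occurs u (rcons (belast m x) m) i by rewrite -ex.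
  case/occurs_rcons: oi' => o0 ue.
  have [k hk] := sync_start ne H (@Tm_start m) ue.
  rewrite -hj in o0; have ey := parse ne H o0 (k := k) ltac:(lia).
  set y := win u' j (k - j) in ey.
  have hc : forall i, occurs u (m :: x) i <-> exists j, i = Pb (Tm m) u' j /\ occurs u' y j.
    by move=> i'; rewrite -(occT H) -ey cats1 -ex.
  exists y; split; [|split; [exact: hc|]].
  + by have [j' [_ ?]] := proj1 (hc i) oi; exists j'.
  + by left; rewrite -ey cats1.
- have hl' : last m x = ~~ m by move: hl; case: (last m x); case: (m).
  have ue := occ_last oi; rewrite hl' in ue.
  have [k hk] := sync_end ne H (@Tm_end m) ue.
  rewrite -hj in oi; have ey := parse ne H oi (k := k.+1) ltac:(rewrite hk /=; lia).
  rewrite hj in oi.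
  set y := win u' j (k.+1 - j) in ey.
  have hc : forall i, occurs u (m :: x) i <-> exists j, i = Pb (Tm m) u' j /\ occurs u' y j.
    move=> i'; rewrite -(occT H) -ey cats1; split.
    + move=> h; apply/occurs_rcons; split => //=.
      by have := occ_last h; rewrite hl' addnS => /(extT H).
    + by case/occurs_rcons.
  exists y; split; [|split; [exact: hc|]].
  + by have [j' [_ ?]] := proj1 (hc i) oi; exists j'.
  + by right.
Qed.

Lemma caseA u' u x i : IsImg Am u' u -> occurs u (true :: x) i ->
  exists y, (exists j, occurs u' (true :: y) j) /\
   (forall i, occurs u (true :: x) i <-> exists j, i = Pb Am u' j /\ occurs u' (true :: y) j) /\
   ((true :: x = mapw Am (true :: y) /\ last true x = false) \/
    (rcons (true :: x) false = mapw Am (true :: y) /\ last true x = true)).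
Proof.
move=> H oi; have ne := Am_ne.
have ui : u i = true by have := occ_nth oi (k := 0); rewrite addn0 => ->.
have [j hj] := sync_start ne H Am_start ui.
set X0 := if last true x then true :: x else belast true x.
have eX : forall i, occurs u (true :: x) i <-> occurs u (rcons X0 false) i.
  move=> i'; rewrite /X0; case hl: (last true x).
  + split; last by case/occurs_rcons.
    move=> h; apply/occurs_rcons; split => //=.
    by have := occ_last h; rewrite hl addnS => /(extA H).
  + by rewrite -hl -lastI.
have := proj1 (eX i) oi => /occurs_rcons [o0 ue].
have [k hk] := sync_end ne H Am_end ue.
have oX := proj1 (eX i) oi; rewrite -hj in oX.
have ey := parse ne H oX (k := k.+1) ltac:(rewrite hk size_rcons hj; lia).
have [y ey'] : exists y, win u' j (k.+1 - j) = true :: y.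
  move: ey; case: (win u' j (k.+1 - j)) => [|[] y] ey; first by move: (congr1 size ey); rewrite size_rcons.
  - by exists y.
  - have := occ_nth oX (k := 0); rewrite ey addn0 hj ui; by case/(_ isT).
rewrite ey' in ey.
have hc : forall i, occurs u (true :: x) i <-> exists j, i = Pb Am u' j /\ occurs u' (true :: y) j.
  by move=> i'; rewrite -(occA H) -ey.
exists y; split; [|split; [exact: hc|]].
- by have [j' [_ ?]] := proj1 (hc i) oi; exists j'.
- move: ey; rewrite /X0; case hl: (last true x) => ey.
  + by right.
  + by left; rewrite -ey -{1}hl -lastI.
Qed.

Definition Tr u x u' y := forall g, derived_fixed_by u' y g -> derived_fixed_by u x g.

Lemma size_mapTm m y : size (mapw (Tm m) y) = size y + count_mem (~~ m) (mapw (Tm m) y).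
Proof.
elim: y => //= c y IH; rewrite mapw_cons size_cat count_cat IH /Tm.
by case: eqP => _ /=; case: (m) => /=; lia.
Qed.

Lemma size_mapA y : size (mapw Am y) = size y + count_mem true (mapw Am y).
Proof.
elim: y => //= c y IH; rewrite mapw_cons size_cat count_cat IH.
by case: c => /=; lia.
Qed.

Lemma count_pos (a : bool) s : a \in s -> 0 < count_mem a s.
Proof. by rewrite -has_pred1 has_count. Qed.

Lemma mem_last_cons (b : bool) x : last b x \in b :: x.
Proof. exact: mem_last. Qed.

Lemma LT1 m u' u x i : IsImg (Tm m) u' u -> occurs u (m :: x) i ->
  exists y, factor u' y /\ Tr u (m :: x) u' y /\ size y < size (m :: x).
Proof.
move=> H oi; have [y [[j oj] [hc hd]]] := caseTm H oi.
exists y; split; first by exists j.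
split; first by move=> g; apply: (derived_R2 (Tm_ne m) H (@Tm_inj m) hc).
case: hd => [e|[e hl]].
- have := congr1 size e; rewrite size_cat /= => e2.
  have := size_mapTm m y; lia.
- have hin : ~~ m \in m :: x by rewrite -hl mem_last_cons.
  have := count_pos hin; rewrite e => hp.
  have := size_mapTm m y; rewrite -e => hs; rewrite -e in hp; lia.
Qed.

Lemma LT2 m u' u x i : IsImg (Tm m) u' u -> occurs u (~~ m :: x) i ->
  exists y, factor u' y /\ Tr u (~~ m :: x) u' y /\
    (x = [::] -> y = [:: ~~ m]) /\ (x <> [::] -> size y < size (~~ m :: x)).
Proof.
move=> H oi.
have hprev : forall i, occurs u (~~ m :: x) i -> 0 < i /\ u i.-1 = m.
  move=> i' h; apply: (prevT H); have := occ_nth h (k := 0); rewrite addn0; exact.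
have [i0 ui0] := hprev i oi.
have oi' : occurs u (m :: ~~ m :: x) i.-1 by apply/occurs_cons; rewrite prednK.
have [y [[j oj] [hc hd]]] := caseTm H oi'.
exists y; split; first by exists j.
split; first by move=> g /(derived_R2 (Tm_ne m) H (@Tm_inj m) hc); apply: derived_R1.
have nm : ~~ m != m by case: (m).
case: hd => [e|[e hl]].
- have hl : last false (m :: ~~ m :: x) = last false (mapw (Tm m) y ++ [:: m]) by rewrite e.
  split.
  + by move=> x0; rewrite x0 cats1 last_rcons /= in hl; move: hl; case: (m).
  + move=> _; have := congr1 size e; rewrite size_cat /= => e2.
    have hin : ~~ m \in mapw (Tm m) y.
      have : ~~ m \in mapw (Tm m) y ++ [:: m] by rewrite -e !inE eqxx orbT.
      by rewrite mem_cat mem_seq1 => /orP [//|/eqP]; case: (m).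
    have := count_pos hin; have := size_mapTm m y; lia.
- split.
  + move=> x0; rewrite x0 in e; apply: (@Tm_inj m).
    by rewrite -e mapw1 /Tm (negbTE nm).
  + move=> xn.
    have hs : size x + 2 = size y + (1 + count_mem (~~ m) x).
      by have := size_mapTm m y; rewrite -e /=; case: (m) => /=; lia.
    have hin : ~~ m \in x.
      by case: x xn hl {e hs oi hprev oi' hc} => // a x _ /= <-; exact: mem_last.
    have := count_pos hin; move=> hp /=; lia.
Qed.

Lemma LA1 u' u x i : IsImg Am u' u -> occurs u (true :: x) i ->
  exists y, factor u' y /\ Tr u (true :: x) u' y /\
    (x = [::] -> y = [:: true]) /\ (x <> [::] -> size y < size (true :: x)).
Proof.
move=> H oi; have [y [[j oj] [hc hd]]] := caseA H oi.
exists (true :: y); split; first by exists j.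
split; first by move=> g; apply: (derived_R2 Am_ne H Am_inj hc).
case: hd => [[e hl]|[e hl]].
- split; first by move=> x0; rewrite x0 in hl.
  move=> _; have := size_mapA (true :: y); rewrite -e /= => hs; lia.
- split.
  + by move=> x0; rewrite x0 in e; apply: Am_inj; rewrite -e.
  + move=> xn.
    have hs : size x + 2 = size (true :: y) + (1 + count_mem true x).
      by have := size_mapA (true :: y); rewrite -e -cats1 size_cat count_cat /=; lia.
    have hin : true \in x.
      by case: x xn hl {e hs oi hc} => // a x _ /= <-; exact: mem_last.
    have hp := count_pos hin.
    have key : forall a b c : nat, a + 2 = b.+1 + (1 + c) -> 0 < c -> b.+2 <= a.+1 by lia.
    exact: key _ _ _ hs hp.
Qed.

Lemma phi_cons c v d : phi (c :: v) d = mapw (phi_letter c) (phi v d).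
Proof. by []. Qed.

Lemma phi_letter_ne c : nonerasing (phi_letter c).
Proof. by case: c => -[]. Qed.

Lemma mapw_ne f s : nonerasing f -> 0 < size s -> 0 < size (mapw f s).
Proof. by move=> ne; have := size_mapw_ge s ne; lia. Qed.

Lemma phi_ne v : nonerasing (phi v).
Proof.
elim: v => // c v IH d; rewrite phi_cons; apply: mapw_ne; first exact: phi_letter_ne.
exact: IH.
Qed.

Lemma foldr_phi v s : foldr (fun x acc => mapw (phi_letter x) acc) s v = mapw (phi v) s.
Proof.
elim: v s => [|c v IH] s /=.
- by elim: s => //= d s IHs; rewrite mapw_cons -IHs.
- by rewrite IH mapw_comp.
Qed.

Lemma phi_rcons v c d : phi (rcons v c) d = mapw (phi v) (phi_letter c d).
Proof.
rewrite /phi -cats1 foldr_cat /=.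
by have := foldr_phi v (mapw (phi_letter c) [:: d]); rewrite /phi mapw1 => ->.
Qed.

Lemma phi_beta : phi_letter Sbeta = Tm true.
Proof. by apply: functional_extensionality => -[]. Qed.

Lemma phi_b : phi_letter Sb = Tm false.
Proof. by apply: functional_extensionality => -[]. Qed.

Lemma IsImg_comp f g u'' u' u : IsImg g u'' u' -> IsImg f u' u ->
  IsImg (fun d => mapw f (g d)) u'' u.
Proof.
move=> Hg Hf n; rewrite -mapw_comp Hg; exact: Hf.
Qed.

Definition imgf (g : morph) (u : nat -> bool) n := nth false (mapw g (pref u n.+1)) n.

Lemma IsImg_imgf g u : nonerasing g -> IsImg g u (imgf g u).
Proof.
move=> ne n; apply: (@eq_from_nth _ false); first by rewrite /pref size_mkseq.
move=> i hi; rewrite /pref nth_mkseq // /imgf.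
case: (leqP n i.+1) => h.
- rewrite -(subnKC h) -/(pref u _) pref_add mapw_cat nth_cat hi //.
- rewrite -(subnKC (ltnW h)) -/(pref u _) pref_add mapw_cat nth_cat.
  have := size_mapw_ge (pref u i.+1) ne; rewrite /pref size_mkseq => h2.
  by rewrite ifT //; lia.
Qed.

Lemma IsImg_uniq f u' u1 u2 : nonerasing f -> IsImg f u' u1 -> IsImg f u' u2 -> u1 = u2.
Proof.
move=> ne H1 H2; apply: functional_extensionality => i.
have e1 := H1 i.+1; have e2 := H2 i.+1.
have h := size_mapw_ge (pref u' i.+1) ne.
move: e1 e2 h; set L := size (mapw f (pref u' i.+1)) => e1 e2 h.
have e : pref u1 L = pref u2 L by rewrite -e1 -e2.
move: h; rewrite /pref size_mkseq => h.
by have := congr1 (nth false ^~ i) e; rewrite /pref !nth_mkseq.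
Qed.

Lemma IsImg_ext f g u' u : f =1 g -> IsImg f u' u -> IsImg g u' u.
Proof. by move=> e H n; rewrite -!(eq_mapw _ e); exact: H. Qed.

Lemma Fix_decomp c v u : Fix (phi (c :: v)) u ->
  IsImg (phi_letter c) (imgf (phi v) u) u /\ Fix (phi (cyc (c :: v))) (imgf (phi v) u).
Proof.
move=> H; set u' := imgf (phi v) u.
have H1 : IsImg (phi v) u u' by apply: IsImg_imgf; exact: phi_ne.
have H2 : IsImg (phi_letter c) u' (imgf (phi_letter c) u') by apply: IsImg_imgf; exact: phi_letter_ne.
have H3 := IsImg_comp H1 H2.
have e : imgf (phi_letter c) u' = u.
  apply: (IsImg_uniq (phi_ne (c :: v)) _ H).
  by apply: IsImg_ext H3 => d.
rewrite e in H2.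
split => //.
rewrite /cyc rot1_cons.
apply: (IsImg_ext (f := fun d => mapw (phi v) (phi_letter c d))).
- by move=> d; rewrite phi_rcons.
- exact: IsImg_comp H2 H1.
Qed.

Definition isBeta (c : sym) := if c is Sbeta then true else false.

Lemma conjAB s : false :: mapw Am s = mapw (Tm false) s ++ [:: false].
Proof. by elim: s => //= c s IH; rewrite !mapw_cons -catA -IH; case: c. Qed.

Lemma mapw_phi_nil s : mapw (phi [::]) s = s.
Proof. by elim: s => //= d s IH; rewrite mapw_cons IH. Qed.

Lemma phi_head v d : all is_a_or_beta v -> has isBeta v -> exists t, phi v d = true :: t.
Proof.
elim: v => // c v IH /andP[hc hv] hb; rewrite phi_cons.
case: c hc hb => // _ hb.
- have [t ->] := IH hv hb; rewrite mapw_cons /=; by eexists.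
- rewrite phi_beta; have := phi_ne v d.
  case: (phi v d) => // e t _; rewrite mapw_cons /Tm; case: eqP => _; by eexists.
Qed.

Lemma zlemma v : all is_a_or_beta v -> exists z, phi v true = true :: z /\
  forall s, mapw (phi (H v)) s ++ z = z ++ mapw (phi v) s.
Proof.
elim: v => [|c v IH].
- by move=> _; exists [::]; split => // s; rewrite cats0 mapw_phi_nil.
- move=> /andP[hc /IH [z' [e1 e2]]]; case: c hc => // _.
  + exists (mapw (Tm false) z' ++ [:: false]); split.
    * by rewrite phi_cons e1 mapw_cons /= -conjAB.
    * move=> s.
      have E1 : mapw (phi (H (Sa :: v))) s = mapw (Tm false) (mapw (phi (H v)) s).
        by rewrite mapw_comp -phi_b.
      have E2 : mapw (phi (Sa :: v)) s = mapw Am (mapw (phi v) s) by rewrite mapw_comp.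
      rewrite E1 E2 catA -mapw_cat e2 mapw_cat -catA -conjAB -catA.
      by [].
  + exists (mapw (Tm true) z'); split.
    * by rewrite phi_cons e1 phi_beta mapw_cons.
    * move=> s.
      have E1 : mapw (phi (H (Sbeta :: v))) s = mapw (Tm true) (mapw (phi (H v)) s).
        by rewrite mapw_comp -phi_beta.
      have E2 : mapw (phi (Sbeta :: v)) s = mapw (Tm true) (mapw (phi v) s).
        by rewrite mapw_comp -phi_beta.
      by rewrite E1 E2 -!mapw_cat e2.
Qed.

Lemma pref_S u n : pref u n.+1 = u 0 :: pref (fun k => u k.+1) n.
Proof. by rewrite -add1n pref_add win_shift. Qed.

Lemma Fix_tail v u : all is_a_or_beta v -> has isBeta v -> Fix (phi v) u ->
  u 0 = true /\ Fix (phi (H v)) (fun n => u n.+1).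
Proof.
move=> ha hb hF.
have u0 : u 0 = true.
  have := hF 1; rewrite /pref /= mapw1; have [t ->] := phi_head (u 0) ha hb.
  by case.
split => // n; set t := fun k => u k.+1.
have [z [ez ec]] := zlemma ha.
have := hF n.+1; rewrite pref_S mapw_cons u0 ez -/t.
set L := size _; rewrite /= -ec.
case: L => [|L] //=; rewrite pref_S -/t => -[] _ e.
have := congr1 (take (size (mapw (phi (H v)) (pref t n)))) e.
rewrite take_size_cat // => ->.
by rewrite /pref /mkseq -map_take take_iota size_map size_iota.
Qed.

Definition isA (c : sym) := if c is Sa then true else false.
Definition isB (c : sym) := if c is Sb then true else false.
Definition is_b_or_beta (c : sym) := match c with Sb | Sbeta => true | _ => false end.

Definition Inv (v : seq sym) := has isBeta v /\
  ((all is_a_or_beta v /\ has isA v) \/ (all is_b_or_beta v /\ has isB v)).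

Lemma all_rot' (T : Type) (a : pred T) n s : all a (rot n s) = all a s.
Proof. by rewrite /rot all_cat andbC -all_cat cat_take_drop. Qed.

Lemma iter_cyc_all (a : pred sym) k x : all a (iter k cyc x) = all a x.
Proof. by elim: k => //= k IH; rewrite /cyc all_rot' IH. Qed.

Lemma iter_cyc_has (a : pred sym) k x : has a (iter k cyc x) = has a x.
Proof. by elim: k => //= k IH; rewrite /cyc has_rot IH. Qed.

Lemma H_iter k x : H (iter k cyc x) = iter k cyc (H x).
Proof. by elim: k => //= k IH; rewrite /cyc /H map_rot -IH. Qed.

Lemma HH x : H (H x) = H x.
Proof. by rewrite /H -map_comp; apply: eq_map => -[]. Qed.

Definition Fam w v := Cset w v \/ Cset (H w) v.

Lemma Fam_cyc w v : Fam w v -> Fam w (cyc v).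
Proof. by case=> -[k ->]; [left|right]; exists k.+1. Qed.

Lemma Fam_H w v : Fam w v -> Fam w (H v).
Proof.
case=> -[k ->]; right; exists k; rewrite H_iter //.
by rewrite HH.
Qed.

Lemma Inv_w w : all is_a_or_beta w -> has isA w -> has isBeta w -> forall v, Fam w v -> Inv v.
Proof.
move=> hw ha hb v [] [k ->]; rewrite /Inv !iter_cyc_has !iter_cyc_all.
- by split => //; left.
- split; first by rewrite /H has_map; apply: sub_has hb => -[].
  right; split.
  + by rewrite /H all_map; apply: sub_all hw => -[].
  + by rewrite /H has_map; apply: sub_has ha => -[].
Qed.

Definition fixes (d : bool) (c : sym) := phi_letter c d == [:: d].

Lemma phi_single v d e : phi v d = [:: e] -> e = d /\ all (fixes d) v.
Proof.
elim: v e => [|c v IH] e; first by case=> ->.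
rewrite phi_cons; have := phi_ne v d.
case E: (phi v d) => [|e' [|e'' t]] // _.
- rewrite mapw1 => hc; have [ed hv] := IH e' E; subst e'.
  have : e = d /\ fixes d c.
    by move/eqP: hc; rewrite /fixes; case: c; case: (d); case: e.
  by case=> -> hf; split => //=; rewrite hf hv.
- rewrite !mapw_cons => /(congr1 size); rewrite !size_cat /=.
  by have := phi_letter_ne c e'; have := phi_letter_ne c e''; lia.
Qed.

Lemma phi_full_or_single v d :
  (true \in phi v d /\ false \in phi v d) \/ exists e, phi v d = [:: e].
Proof.
elim: v => [|c v IH]; first by right; exists d.
rewrite phi_cons; case: IH => [[h1 h2]|[e ->]].
- left; have sub : forall b, b \in phi v d -> forall x, x \in phi_letter c b -> x \in mapw (phi_letter c) (phi v d).
    move=> b; elim: (phi v d) => //= a s IHs; rewrite inE => /orP [/eqP->|/IHs h] x hx;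
    rewrite mapw_cons mem_cat ?hx //.
    by rewrite h ?orbT.
  by case: c sub => sub; split; solve [apply: (sub true h1); done | apply: (sub false h2); done].
- rewrite mapw1; case: c; case: e => /=; by [left | right; eexists].
Qed.

Lemma all_has_contra (P Q : pred sym) v : all P v -> has Q v ->
  (forall c, P c -> Q c -> False) -> False.
Proof.
elim: v => //= c v IH /andP[pc pv] /orP[qc|qv] h; first exact: h pc qc.
exact: IH pv qv h.
Qed.

Lemma Inv_full v : Inv v -> forall d, true \in phi v d /\ false \in phi v d.
Proof.
move=> [hb hab] d; case: (phi_full_or_single v d) => // [[e /phi_single [_ hf]]].
case: d hf => hf.
- by case: hab => -[_ h]; exfalso; apply: (all_has_contra hf h) => -[].
- by exfalso; apply: (all_has_contra hf hb) => -[].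
Qed.

Lemma size_ge2 (s : seq bool) : true \in s -> false \in s -> 1 < size s.
Proof. by case: s => [|a [|b s]] //=; rewrite !inE => /eqP <- /eqP. Qed.

Lemma mpow1 f c : mpow f 1 c = f c.
Proof. exact: mapw1. Qed.

Lemma Inv_prim v : Inv v -> primitive (phi v).
Proof.
move=> hv; exists 1 => c d; rewrite mpow1.
by have [h1 h2] := Inv_full hv c; case: d.
Qed.

Lemma head_mapw f s : nonerasing f -> 0 < size s ->
  head false (mapw f s) = head false (f (head false s)).
Proof.
move=> ne; case: s => // c s _; rewrite mapw_cons.
by have := ne c; case: (f c).
Qed.

Lemma head_phi v : (forall d, head false (phi v d) = d) \/
  (exists e, forall d, head false (phi v d) = e).
Proof.
elim: v => [|c v IH]; first by left.
have hh : forall d, head false (phi (c :: v) d) = head false (phi_letter c (head false (phi v d))).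
  by move=> d; rewrite phi_cons head_mapw //; [exact: phi_letter_ne | exact: phi_ne].
case: c hh => hh.
- case: IH => [h|[e h]]; [left|right; exists e] => d; rewrite hh h; by case: (d) => //; case: (e).
- by right; exists false => d; rewrite hh; case: (head false (phi v d)).
- case: IH => [h|[e h]]; [left|right; exists e] => d; rewrite hh h; by case: (d) => //; case: (e).
- by right; exists true => d; rewrite hh; case: (head false (phi v d)).
Qed.

Lemma mpow_grow f c x : nonerasing f -> f c = c :: x -> x <> [::] ->
  forall n, exists t, mpow f n c = c :: t /\ n < size (mpow f n c).
Proof.
move=> ne fc xn; elim=> [|n [t [e hs]]]; first by exists [::].
have -> : mpow f n.+1 c = mapw f (mpow f n c) by [].
rewrite e mapw_cons fc; exists (x ++ mapw f t); split => //.
have hx : 0 < size x by case: (x) xn.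
move: hs; rewrite e /= size_cat; have := size_mapw_ge t ne.
lia.
Qed.

Lemma Inv_subst v : Inv v -> substitution (phi v).
Proof.
move=> hv; set c := head false (phi v true).
have hc : head false (phi v c) = c.
  by case: (head_phi v) => [h|[e h]]; rewrite /c !h.
have [h1 h2] := Inv_full hv c; have hs := size_ge2 h1 h2.
move: hc hs; case E: (phi v c) => [|c' [|x0 x]] //= hc _.
rewrite hc in E.
exists c, (x0 :: x); split => //.
move=> N; exists N => n hn.
have [t [_ h]] := mpow_grow (phi_ne v) E (fun e => ltac:(discriminate e)) n.
lia.
Qed.

Lemma phi_fix_all v d : all (fixes d) v -> phi v d = [:: d].
Proof.
elim: v => // c v IH /andP[/eqP hc /IH hv]; by rewrite phi_cons hv mapw1.
Qed.

Lemma mpow_fix f d : f d = [:: d] -> forall n, mpow f n d = [:: d].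
Proof. by move=> fd; elim=> // n IH; rewrite /= IH mapw1. Qed.

Lemma prim_w w : all is_a_or_beta w -> primitive (phi w) -> has isA w /\ has isBeta w.
Proof.
move=> hw [n hn]; split; apply/negPn/negP => hn'.
- have : all (fixes true) w.
    by elim: w hw hn' {hn} => //= -[] w IH //= /andP[_ /IH h] /h.
  move=> /phi_fix_all /mpow_fix /(_ n) e; have := hn true false; by rewrite e.
- have : all (fixes false) w.
    by elim: w hw hn' {hn} => //= -[] w IH //= /andP[_ /IH h] /h.
  move=> /phi_fix_all /mpow_fix /(_ n) e; have := hn false true; by rewrite e.
Qed.

Definition Good w u x := exists v', Fam w v' /\ derived_fixed_by u x (phi v').

Lemma Good_Tr w u x u' y : Good w u' y -> Tr u x u' y -> Good w u x.
Proof. by move=> [v' [hv hd]] tr; exists v'; split => //; apply: tr. Qed.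

Lemma Good_base w v u : Fam w v -> Fix (phi v) u -> Good w u [::].
Proof.
move=> hv hF; exists v; split => //; apply: derived_base.
by apply/Fix_fixed_by => //; exact: phi_ne.
Qed.

Lemma Good_tail w u x : Good w (fun n => u n.+1) x -> ~ occurs u x 0 -> Good w u x.
Proof. by move=> [v' [hv hd]] n0; exists v'; split => //; apply: derived_Rtail. Qed.

Lemma factor_letter v u b : Inv v -> Fix (phi v) u -> factor u [:: b].
Proof.
move=> hv hF; have := hF 1; rewrite /pref /= mapw1.
have hb : b \in phi v (u 0) by have [h1 h2] := Inv_full hv (u 0); case: (b).
set L := size _ => e; rewrite e in hb.
exists (index b (mkseq u L)) => j; rewrite ltnS leqn0 => /eqP -> /=.
rewrite addn0; have hi : index b (mkseq u L) < L by rewrite -{2}(size_mkseq u L) index_mem.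
by have := nth_index false hb; rewrite nth_mkseq.
Qed.

Lemma factor_tail u x : u 0 = true -> factor u (false :: x) -> factor (fun n => u n.+1) (false :: x).
Proof.
move=> u0 [[|i] oi]; first by have := oi 0 erefl; rewrite addn0 u0.
by exists i => j hj; have := oi j hj; rewrite addSn.
Qed.

Lemma no_occ0 u x : u 0 = true -> ~ occurs u (false :: x) 0.
Proof. by move=> u0 oi; have := oi 0 erefl; rewrite addn0 u0. Qed.

Lemma find_rcons (a : pred sym) v c : has a v -> find a (rcons v c) = find a v.
Proof. by move=> h; rewrite -cats1 find_cat h. Qed.

Section Main.
Variable w : seq sym.
Hypothesis hw : all is_a_or_beta w.
Hypothesis ha : has isA w.
Hypothesis hb : has isBeta w.

Lemma decomp v u : Fam w v -> Fix (phi v) u -> exists c v', v = c :: v' /\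
  IsImg (phi_letter c) (imgf (phi v') u) u /\ Fix (phi (cyc v)) (imgf (phi v') u) /\
  Fam w (cyc v) /\ (c = Sa \/ c = Sb \/ c = Sbeta) /\
  (c = Sa -> all is_a_or_beta v /\ has isBeta v).
Proof.
move=> hv hF; have [hbv hab] := Inv_w hw ha hb hv.
case: v hv hF hbv hab => // c v' hv hF hbv hab.
have [H1 H2] := Fix_decomp hF.
exists c, v'; do 4 (split => //); first exact: Fam_cyc.
split.
- case: hab => -[/andP[hc _] _]; move: hc; case: (c) => // _; by auto.
- move=> ec; split => //; case: hab => -[h1 h2] //.
  by exfalso; move: h1; rewrite ec.
Qed.

Lemma chain1 k : forall v u, Fam w v -> find isBeta v = k -> Fix (phi v) u -> Good w u [:: true].
Proof.
elim: k => [|k IH] v u hv hk hF.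
- have [c [v' [ev [H1 [H2 [hv' [hc _]]]]]]] := decomp hv hF.
  have [i oi] := factor_letter true (Inv_w hw ha hb hv) hF.
  subst v; case: hc => [ec|[ec|ec]]; subst c => //.
  rewrite phi_beta in H1.
  have [y [_ [tr hs]]] := LT1 H1 oi.
  case: y tr hs => // tr _; exact: Good_Tr (Good_base hv' H2) tr.
- have [c [v' [ev [H1 [H2 [hv' [hc _]]]]]]] := decomp hv hF.
  have [i oi] := factor_letter true (Inv_w hw ha hb hv) hF.
  have hbv := (Inv_w hw ha hb hv).1.
  subst v; case: hc => [ec|[ec|ec]]; subst c => //.
  + have [y [_ [tr [hy _]]]] := LA1 H1 oi; rewrite (hy erefl) in tr.
    apply: Good_Tr tr; apply: IH hv' _ H2.
    by rewrite /cyc rot1_cons find_rcons //; case: hk.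
  + rewrite phi_b in H1.
    have [y [_ [tr [hy _]]]] := LT2 (x := [::]) H1 oi; rewrite (hy erefl) in tr.
    apply: Good_Tr tr; apply: IH hv' _ H2.
    by rewrite /cyc rot1_cons find_rcons //; case: hk.
Qed.

Lemma chain0 k : forall v u, Fam w v -> find (predC isBeta) v = k -> Fix (phi v) u -> Good w u [:: false].
Proof.
elim: k => [|k IH] v u hv hk hF.
- have [c [v' [ev [H1 [H2 [hv' [hc hA]]]]]]] := decomp hv hF.
  have [i oi] := factor_letter false (Inv_w hw ha hb hv) hF.
  subst v; case: hc => [ec|[ec|ec]]; subst c => //.
  +
    have [hall hbet] := hA erefl.
    have [u0 hT] := Fix_tail hall hbet hF.
    have hvH := Fam_H hv.
    have [c2 [v2 [ev2 [G1 [G2 [hv2 _]]]]]] := decomp hvH hT.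
    move: ev2 => [ec2 ev2]; subst c2.
    rewrite phi_b in G1.
    have [i2 oi2] := factor_letter false (Inv_w hw ha hb hvH) hT.
    have [y [_ [tr hs]]] := LT1 G1 oi2.
    case: y tr hs => // tr _.
    apply: Good_tail; last exact: no_occ0.
    exact: Good_Tr (Good_base hv2 G2) tr.
  + rewrite phi_b in H1.
    have [y [_ [tr hs]]] := LT1 H1 oi.
    case: y tr hs => // tr _; exact: Good_Tr (Good_base hv' H2) tr.
- have [c [v' [ev [H1 [H2 [hv' [hc _]]]]]]] := decomp hv hF.
  have [i oi] := factor_letter false (Inv_w hw ha hb hv) hF.
  have hnb : has (predC isBeta) v.
    by case: (Inv_w hw ha hb hv) => _ [[_ h]|[_ h]]; apply: sub_has h => -[].
  subst v; case: hc => [ec|[ec|ec]]; subst c => //; try by move: hk => /=.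
  rewrite phi_beta in H1.
  have [y [_ [tr [hy _]]]] := LT2 (x := [::]) H1 oi; rewrite (hy erefl) in tr.
  apply: Good_Tr tr; apply: IH hv' _ H2.
  by rewrite /cyc rot1_cons find_rcons //; case: hk.
Qed.
End Main.

Section Main2.
Variable w : seq sym.
Hypothesis hw : all is_a_or_beta w.
Hypothesis ha : has isA w.
Hypothesis hb : has isBeta w.

Lemma main n : forall x, size x <= n -> forall v u, Fam w v -> Fix (phi v) u ->
  factor u x -> Good w u x.
Proof.
elim: n => [|n IH] x hx v u hv hF fx.
- by case: x hx fx => // _ _; exact: Good_base hv hF.
- case: x hx fx => [|b [|b2 x2]] hx fx.
  + exact: Good_base hv hF.
  + case: b hx fx => hx fx.
    * exact: (chain1 hw ha hb hv erefl hF).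
    * exact: (chain0 hw ha hb hv erefl hF).
  + have [i oi] := fx.
    have [c [v' [ev [H1 [H2 [hv' [hc hA]]]]]]] := decomp hw ha hb hv hF.
    have IH' : forall y, size y < size [:: b, b2 & x2] -> factor (imgf (phi v') u) y ->
        Good w (imgf (phi v') u) y.
      move=> y hy fy; apply: (IH y _ (cyc v) _ hv' H2 fy); move: hx hy => /=; lia.
    have nn : b2 :: x2 <> [::] by [].
    case: hc => [ec|[ec|ec]]; subst c.
    * case: b hx oi fx IH' => hx oi fx IH'.
      -- have [y [fy [tr [_ hs]]]] := LA1 H1 oi.
         exact: Good_Tr (IH' y (hs nn) fy) tr.
      -- have [hall hbet] := hA erefl.
         have [u0 hT] := Fix_tail hall hbet hF.
         have hvH := Fam_H hv.
         have [c2 [v2 [ev2 [G1 [G2 [hv2 _]]]]]] := decomp hw ha hb hvH hT.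
         move: ev2; rewrite ev => -[ec2 ev2]; subst c2.
         rewrite phi_b in G1.
         have [i2 oi2] := factor_tail u0 fx.
         have [y [fy [tr hs]]] := LT1 G1 oi2.
         apply: Good_tail; last exact: no_occ0.
         apply: Good_Tr tr; apply: (IH y _ _ _ hv2 G2 fy).
         by move: hx hs => /=; lia.
    * rewrite phi_b in H1; case: b hx oi fx IH' => hx oi fx IH'.
      -- have [y [fy [tr [_ hs]]]] := LT2 (m := false) H1 oi.
         exact: Good_Tr (IH' y (hs nn) fy) tr.
      -- have [y [fy [tr hs]]] := LT1 (m := false) H1 oi.
         exact: Good_Tr (IH' y hs fy) tr.
    * rewrite phi_beta in H1; case: b hx oi fx IH' => hx oi fx IH'.
      -- have [y [fy [tr hs]]] := LT1 (m := true) H1 oi.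
         exact: Good_Tr (IH' y hs fy) tr.
      -- have [y [fy [tr [_ hs]]]] := LT2 (m := true) H1 oi.
         exact: Good_Tr (IH' y (hs nn) fy) tr.
Qed.
End Main2.

Theorem claim28 (w : seq sym) :
  all is_a_or_beta w ->
  primitive (phi w) ->
  closed_under_derivation (fun v => Cset w v \/ Cset (H w) v).
Proof.
move=> hw hp; have [ha hb] := prim_w hw hp.
split.
- move=> v hv; have hI := Inv_w hw ha hb hv; split; [exact: Inv_prim | exact: Inv_subst].
- move=> v hv u hfix x fx.
  have hF : Fix (phi v) u by apply/Fix_fixed_by => //; exact: phi_ne.
  exact: (main hw ha hb (n := size x) (leqnn _) hv hF fx).
Qed.
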